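(* Let $\mathcal{F}$ be a hypothesis class and let $D$ and $D'$ be discrete distributions over $\mathcal{X}$ with densities $d$ and $d'$, both labeled according to the same $f^*\in\mathcal{F}$, such that, except on a set of points of total mass at most $\epsilon$ under $D$, one has $d'(x)\ge c\cdot d(x)$ for an absolute constant $c>0$. Then there exists a constant $c'>1$ such that for any $\epsilon$ and $\delta$, with probability at least $1-\delta$ over a labeled sample set $S$ of size $c'm_{\epsilon,\delta}$ drawn from $D'$, the hypothesis $\mathcal{O}_\mathcal{F}(S)$ has error at most $2\epsilon$ with respect to $D$.
   Context: $m_{\epsilon,\delta}$ denotes the number of labeled samples needed in the realizable PAC model for $\mathcal{F}$ to output a classifier of error at most $\epsilon$ with probability $1-\delta$. $\mathcal{O}_\mathcal{F}$ is an oracle that, given a set $S$ of labeled instances, returns some $f\in\mathcal{F}$ consistent with all labels in $S$ if one exists, and ``None'' otherwise. Error with respect to $D$ means $\Pr_{x\sim D}[f(x)\ne f^*(x)]$. *)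

(* Defs.v *)
From HB Require Import structures.
From mathcomp Require Import all_boot all_order all_algebra.
From mathcomp Require Import all_classical all_reals.
From mathcomp Require Import ereal esum.

Set Implicit Arguments.
Unset Strict Implicit.
Unset Printing Implicit Defensive.

Import Order.TTheory GRing.Theory Num.Theory.
Local Open Scope classical_set_scope.
Local Open Scope ring_scope.

Section pac.
Variables (R : realType) (X : choiceType).

(* A discrete distribution over X, given by its density d : X -> R
   (nonnegative, total mass 1; the support is then automatically countable). *)
Definition discrete_distr (d : X -> R) : Prop :=
  (forall x, 0 <= d x) /\ (\esum_(x in [set: X]) (d x)%:E = 1%E).

Definition mass (d : X -> R) (A : set X) : \bar R := \esum_(x in A) (d x)%:E.

Definition err (d : X -> R) (fstar h : X -> bool) : \bar R :=
  mass d [set x | h x != fstar x].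

Definition sample_prob (n : nat) (d : X -> R) (E : set (n.-tuple X)) : \bar R :=
  \esum_(s in E) (\prod_(i < n) d (tnth s i))%:E.

Definition labeled (n : nat) (s : n.-tuple X) (f : X -> bool) : seq (X * bool) :=
  [seq (x, f x) | x <- s].

Definition consistent (S : seq (X * bool)) (h : X -> bool) : bool :=
  all (fun p => h p.1 == p.2) S.

Definition consistency_oracle (F : set (X -> bool))
    (O : seq (X * bool) -> option (X -> bool)) : Prop :=
  forall S, match O S with
            | Some h => F h /\ consistent S h
            | None => ~ (exists h, F h /\ consistent S h)
            end.

(* m labeled samples suffice in the realizable PAC model for F (learning via the
   consistency oracle, i.e. for every consistent hypothesis) to have error at most
   eps with probability at least 1 - delta, for every (discrete) distribution
   and every target in F. *)
Definition pac_sufficient (F : set (X -> bool)) (eps delta : R) (m : nat) : Prop :=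
  forall (d : X -> R) (fstar : X -> bool), discrete_distr d -> F fstar ->
    ((1 - delta)%:E <=
     sample_prob d [set s : m.-tuple X | forall h, F h ->
                      consistent (labeled s fstar) h -> err d fstar h <= eps%:E])%E.

Definition sample_complexity (F : set (X -> bool)) (eps delta : R) (m : nat) : Prop :=
  pac_sufficient F eps delta m /\ forall k, pac_sufficient F eps delta k -> (m <= k)%N.

End pac.

Definition scaled_size (R : realType) (c' : R) (m : nat) : nat :=
  `|Num.ceil (c' * m%:R)|%N.

(* Main.v *)
Require Import Defs.
From HB Require Import structures.
From mathcomp Require Import all_boot all_order all_algebra.
From mathcomp Require Import all_classical all_reals.
From mathcomp Require Import ereal esum.
From mathcomp Require Import ring lra.

Import Order.TTheory GRing.Theory Num.Theory.
Local Open Scope classical_set_scope.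
Local Open Scope ring_scope.
Section Helpers.
Variables (R : realType) (X : choiceType).
Local Open Scope ereal_scope.

Lemma esumZ (T : choiceType) (S : set T) (a : T -> \bar R) (r : R) : (0 <= r)%R ->
  (forall i, 0 <= a i) ->
  \esum_(i in S) (r%:E * a i) = r%:E * \esum_(i in S) a i.
Proof.
move=> r0 a0; rewrite /esum -ereal_supZl //; last first.
  by apply/set0P; exists 0; exists set0; [exact: fsets_set0|rewrite fsbig_set0].
rewrite image_comp; congr ereal_sup; apply: eq_imagel => Y _ /=.
by rewrite ge0_mule_fsumr.
Qed.

Lemma lemul2l (a b c : \bar R) : 0 <= a -> b <= c -> a * b <= a * c.
Proof. by move=> a0 bc; exact: (lee_wpmul2l a0 bc). Qed.

Fixpoint Pr (d : X -> R) (n : nat) (P : seq X -> Prop) : \bar R :=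
  match n with
  | 0 => if `[< P [::] >] then 1 else 0
  | n'.+1 => \esum_(x in [set: X]) (d x)%:E * Pr d n' (fun s => P (x :: s))
  end.

Definition nonneg (d : X -> R) := forall x, (0 <= d x)%R.

Lemma Pr_ge0 d n P : nonneg d -> 0 <= Pr d n P.
Proof.
move=> d0; elim: n P => [|n IH] P /=; first by case: asboolP.
by apply: esum_ge0 => x _; apply: mule_ge0; [rewrite lee_fin|exact: IH].
Qed.

Lemma Pr_le d n (P Q : seq X -> Prop) : nonneg d -> (forall s, P s -> Q s) ->
  Pr d n P <= Pr d n Q.
Proof.
move=> d0; elim: n P Q => [|n IH] P Q PQ /=.
  case: (asboolP (P [::])) => HP; case: (asboolP (Q [::])) => HQ //.
  by case: HQ; exact: PQ.
apply: le_esum => x _; apply: lemul2l; first by rewrite lee_fin.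
by apply: IH => s; exact: PQ.
Qed.

Lemma Pr_false d n (P : seq X -> Prop) : (forall s, ~ P s) -> Pr d n P = 0.
Proof.
elim: n P => [|n IH] P HP /=; first by case: asboolP => // /HP.
by apply: esum1 => x _; rewrite IH ?mule0 // => s; exact: HP.
Qed.

Lemma Pr_compl d n (P : seq X -> Prop) : discrete_distr d ->
  Pr d n P + Pr d n (fun s => ~ P s) = 1.
Proof.
move=> [d0 d1]; elim: n P => [|n IH] P /=.
  case: (asboolP (P [::])) => HP; case: (asboolP (~ P [::])) => HnP //;
    rewrite ?adde0 ?add0e //; by case: HnP.
rewrite -esumD; first last.
- by move=> x _; apply: mule_ge0; [rewrite lee_fin|exact: Pr_ge0].
- by move=> x _; apply: mule_ge0; [rewrite lee_fin|exact: Pr_ge0].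
rewrite -d1; apply: eq_esum => x _.
by rewrite -ge0_muleDr ?IH ?mule1 //; exact: Pr_ge0.
Qed.

Lemma Pr_le1 d n P : discrete_distr d -> Pr d n P <= 1.
Proof.
move=> dd; rewrite -(Pr_compl d n P dd) leeDl //; apply: Pr_ge0; exact: dd.1.
Qed.

Lemma Pr_fin d n P : discrete_distr d -> Pr d n P \is a fin_num.
Proof.
move=> dd; rewrite ge0_fin_numE; last exact: (Pr_ge0 d n P dd.1).
by rewrite (le_lt_trans (Pr_le1 d n P dd)) // ltry.
Qed.

Lemma bridge d n (P : seq X -> Prop) : nonneg d ->
  sample_prob d [set t : n.-tuple X | P (tval t)] = Pr d n P.
Proof.
move=> d0; elim: n P => [|n IH] P.
  rewrite /sample_prob /=; case: asboolP => HP.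
    rewrite (_ : [set t : 0.-tuple X | P t] = [set [tuple]]); last first.
      by apply/seteqP; split => t /=; rewrite (tuple0 t).
    by rewrite esum_set1 ?big_ord0 // lee_fin big_ord0.
  rewrite (_ : [set t : 0.-tuple X | P t] = set0) ?esum_set0 //.
  by apply/seteqP; split => t //=; rewrite (tuple0 t).
rewrite /sample_prob.
rewrite (reindex_esum ([set: X] `*`` (fun x => [set t : n.-tuple X | P (x :: tval t)]))
   _ (fun p => [tuple of p.1 :: p.2])); last first.
  split.
  - by move=> [x t] /= [_ H].
  - by move=> [x t] [y u] _ _ /= [-> /val_inj ->].
  - by move=> t; case/tupleP: t => x u /= Pt; exists (x, u).
rewrite -(@esum_esum _ _ _ [set: X] (fun x => [set t : n.-tuple X | P (x :: tval t)])
  (fun x t => (\prod_(i < n.+1) d (tnth [tuple of x :: t] i))%:E)); last first.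
  by move=> x t _ _; rewrite lee_fin; apply: prodr_ge0 => i _.
apply: eq_esum => x _.
under eq_esum => t _ do rewrite big_ord_recl tnth0 EFinM.
under eq_esum => t _ do under eq_bigr => i _ do rewrite tnthS.
rewrite (@esumZ _ _ (fun t : n.-tuple X => (\prod_i d (tnth t i))%:E)) //; last first.
  by move=> t; rewrite lee_fin; apply: prodr_ge0.
by congr (_ * _); exact: (IH (fun s => P (x :: s))).
Qed.


Definition mono (P : seq X -> Prop) :=
  forall s1 x s2, P (s1 ++ x :: s2) -> P (s1 ++ s2).

Lemma mono_cons P x : mono P -> mono (fun s => P (x :: s)).
Proof. by move=> mP s1 y s2; exact: (mP (x :: s1) y s2). Qed.

Lemma mono_tail P x s : mono P -> P (x :: s) -> P s.
Proof. by move=> mP; exact: (mP [::] x s). Qed.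

Lemma mono_nil P s : mono P -> P s -> P [::].
Proof. by move=> mP; elim: s => [//|x s IH] /(mono_tail _ _ _ mP) /IH. Qed.

Lemma PrS (d : X -> R) n P :
  Pr d n.+1 P = \esum_(x in [set: X]) (d x)%:E * Pr d n (fun s => P (x :: s)).
Proof. by []. Qed.

Lemma Pr_ext (d : X -> R) n (P Q : seq X -> Prop) : nonneg d ->
  (forall s, P s <-> Q s) -> Pr d n P = Pr d n Q.
Proof.
move=> d0 PQ; apply/le_anti/andP; split; apply: Pr_le => // s /PQ //.
Qed.

Lemma Pr_block (q : X -> R) a b P : discrete_distr q -> mono P ->
  Pr q (a + b) P <= Pr q a P * Pr q b P.
Proof.
move=> qd; have q0 := qd.1.
elim: a P => [|a IH] P mP.
  rewrite add0n /=; case: (asboolP (P [::])) => HP; first by rewrite mul1e.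
  by rewrite mul0e Pr_false // => s /(mono_nil _ _ mP).
rewrite addSn !PrS.
apply: (@le_trans _ _ (\esum_(x in [set: X])
   (Pr q b P * ((q x)%:E * Pr q a (fun s => P (x :: s)))))).
  apply: le_esum => x _; rewrite muleCA. apply: (lemul2l ((q x)%:E)); first by rewrite lee_fin.
  apply: (le_trans (IH _ (mono_cons _ x mP))).
  rewrite [leRHS]muleC; apply: lemul2l; first exact: Pr_ge0.
  by apply: Pr_le => // s; exact: mono_tail.
rewrite -[in leLHS](fineK (Pr_fin q b P qd)).
rewrite esumZ.
- by rewrite muleC (fineK (Pr_fin q b P qd)).
- by apply: fine_ge0; exact: Pr_ge0.
- by move=> x; apply: mule_ge0; [rewrite lee_fin|exact: Pr_ge0].
Qed.

Lemma Pr_allb (d : X -> R) b n : nonneg d ->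
  ((d b) ^+ n)%:E <= Pr d n (fun s => all (pred1 b) s).
Proof.
move=> d0; elim: n => [|n IH]; first by rewrite /= expr0; case: asboolP.
rewrite PrS; apply: esum_ge; exists [set b].
  by split => //; exact: finite_set1.
rewrite fsbig_set1 exprS EFinM; apply: lemul2l; first by rewrite lee_fin.
rewrite (Pr_ext d n _ (fun s => all (pred1 b) s) d0) // => s /=.
by rewrite eqxx.
Qed.

Fixpoint Exe (a : R) (N : nat) (phi : nat -> \bar R) : \bar R :=
  match N with
  | 0 => phi 0%N
  | N'.+1 => a%:E * Exe a N' (fun k => phi k.+1) + (1 - a)%:E * Exe a N' phi
  end.

Lemma Exe_ge0 a N phi : (0 <= a <= 1)%R -> (forall k, 0 <= phi k) -> 0 <= Exe a N phi.
Proof.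
move=> /andP[a0 a1]; elim: N phi => [|N IH] phi phi0 //=.
apply: adde_ge0; apply: mule_ge0; rewrite ?lee_fin ?subr_ge0 //; exact: IH.
Qed.

Lemma Exe_mono a N phi psi : (0 <= a <= 1)%R -> (forall k, phi k <= psi k) ->
  Exe a N phi <= Exe a N psi.
Proof.
move=> /andP[a0 a1]; elim: N phi psi => [|N IH] phi psi le //=.
apply: leeD; apply: lemul2l; rewrite ?lee_fin ?subr_ge0 //; exact: IH.
Qed.

Lemma Exe_esum (q : X -> R) a N (psi : X -> nat -> \bar R) :
  (0 <= a <= 1)%R -> nonneg q -> (forall x k, 0 <= psi x k) ->
  \esum_(x in [set: X]) (q x)%:E * Exe a N (psi x) =
  Exe a N (fun k => \esum_(x in [set: X]) (q x)%:E * psi x k).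
Proof.
move=> a01 q0; have /andP[a0 a1] := a01.
elim: N psi => [|N IH] psi psi0 //=.
have E0 : forall x M phi, (forall k, 0 <= phi k) -> 0 <= (q x)%:E * Exe a M phi.
  by move=> x M phi phi0; apply: mule_ge0; [rewrite lee_fin|exact: Exe_ge0].
rewrite -(IH (fun x k => psi x k.+1)) // -(IH psi) //.
have h1 := @esumZ _ [set: X] (fun x => (q x)%:E * Exe a N (fun k => psi x k.+1)) a a0 (fun x => E0 x N _ (fun k => psi0 x k.+1)).
have a0' : (0 <= 1 - a)%R by rewrite subr_ge0.
have h2 := @esumZ _ [set: X] (fun x => (q x)%:E * Exe a N (psi x)) (1 - a)%R a0' (fun x => E0 x N _ (psi0 x)).
rewrite -h1 -h2.
rewrite -esumD; last first.
- move=> x _; apply: mule_ge0; [by rewrite lee_fin|exact: E0].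
- move=> x _; apply: mule_ge0; [by rewrite lee_fin|exact: E0].
apply: eq_esum => x _.
rewrite ge0_muleDr; last first.
- apply: mule_ge0; [by rewrite lee_fin|exact: Exe_ge0].
- apply: mule_ge0; [by rewrite lee_fin|exact: Exe_ge0].
by rewrite [in LHS]muleCA [X in _ + X = _]muleCA.
Qed.

Lemma Exe_le1 a N phi : (0 <= a <= 1)%R -> (forall k, phi k <= 1) -> Exe a N phi <= 1.
Proof.
move=> /andP[a0 a1]; elim: N phi => [|N IH] phi phi1 //=.
apply: (@le_trans _ _ (a%:E * 1 + (1 - a)%:E * 1)).
  by apply: leeD; apply: lemul2l; rewrite ?lee_fin ?subr_ge0 //; exact: IH.
by rewrite !mule1 -EFinD addrC subrK.
Qed.

Lemma sub_one (a : R) (S : \bar R) : a%:E + S = 1 -> S = (1 - a)%:E.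
Proof.
case: S => [s| |] //= H.
move: H => /eqP; rewrite -EFinD eqe => /eqP H; by apply/eqP; rewrite eqe -H addrAC subrr add0r.
Qed.

Lemma Pr_mixture (q d' : X -> R) (a : R) N P :
  discrete_distr q -> discrete_distr d' -> (0 <= a <= 1)%R ->
  (forall x, a * q x <= d' x)%R -> mono P ->
  Pr d' N P <= Exe a N (fun k => Pr q k P).
Proof.
move=> qd dd a01 aqd; have /andP[a0 a1] := a01.
have q0 := qd.1; have d0 := dd.1.
set r := fun x => (d' x - a * q x)%R.
have r0 : nonneg r by move=> x; rewrite /r subr_ge0.
have sr : \esum_(x in [set: X]) (r x)%:E = (1 - a)%:E.
  apply: sub_one.
  have h := @esumZ _ [set: X] (fun x => (q x)%:E) a a0 (fun x => q0 x).
  rewrite qd.2 mule1 in h; rewrite -h -esumD; first last.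
  - by move=> x _; rewrite lee_fin.
  - by move=> x _; rewrite -EFinM lee_fin mulr_ge0.
  rewrite -dd.2; apply: eq_esum => x _; rewrite -EFinM -EFinD /r.
  by rewrite addrC subrK.
elim: N P => [|N IH] P mP; first by [].
rewrite PrS.
have Eg : forall P' k, 0 <= Pr q k P' by move=> P' k; exact: Pr_ge0.
apply: (@le_trans _ _ (\esum_(x in [set: X]) (d' x)%:E *
      Exe a N (fun k => Pr q k (fun s => P (x :: s))))).
  apply: le_esum => x _; apply: lemul2l; first by rewrite lee_fin.
  exact: IH (mono_cons _ x mP).
have -> : \esum_(x in [set: X]) (d' x)%:E *
      Exe a N (fun k => Pr q k (fun s => P (x :: s))) =
   \esum_(x in [set: X]) (a%:E * ((q x)%:E *
      Exe a N (fun k => Pr q k (fun s => P (x :: s))))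
    + (r x)%:E * Exe a N (fun k => Pr q k (fun s => P (x :: s)))).
  apply: eq_esum => x _.
  rewrite muleA -EFinM -ge0_muleDl ?lee_fin ?mulr_ge0 //.
  by rewrite -EFinD /r addrC subrK.
rewrite esumD; first last.
- by move=> x _; apply: mule_ge0; [rewrite lee_fin|exact: Exe_ge0].
- by move=> x _; apply: mule_ge0; [rewrite lee_fin|apply: mule_ge0; [rewrite lee_fin|exact: Exe_ge0]].
rewrite esumZ //; last first.
  by move=> x; apply: mule_ge0; [rewrite lee_fin|exact: Exe_ge0].
rewrite Exe_esum //=.
apply: leeD; first by [].
apply: (@le_trans _ _ (\esum_(x in [set: X]) (r x)%:E * Exe a N (fun k => Pr q k P))).
  apply: le_esum => x _; apply: lemul2l; first by rewrite lee_fin.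
  apply: Exe_mono => // k; apply: Pr_le => // s; exact: mono_tail.
have Efin : Exe a N (fun k => Pr q k P) \is a fin_num.
  rewrite ge0_fin_numE; last by apply: Exe_ge0.
  apply: (le_lt_trans (Exe_le1 _ _ _ a01 _)); last by rewrite ltry.
  by move=> k; exact: Pr_le1.
rewrite (eq_esum (fun x _ => muleC _ _)).
rewrite -(fineK Efin) esumZ; last by move=> x; rewrite lee_fin.
  by rewrite sr muleC.
by apply: fine_ge0; exact: Exe_ge0.
Qed.



Lemma Exe_geom (a A B t : R) N : (0 <= a <= 1)%R ->
  Exe a N (fun k => (A + B * t ^+ k)%:E) = (A + B * (a * t + 1 - a) ^+ N)%:E.
Proof.
move=> a01; elim: N B => [|N IH] B /=; first by rewrite !expr0.
rewrite (_ : (fun k => (A + B * t ^+ k.+1)%:E) = (fun k => (A + (B * t) * t ^+ k)%:E)); last first.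
  by apply: funext => k; rewrite exprS mulrA [(B * t)%R]mulrC.
rewrite !IH -!EFinM -EFinD; congr EFin; rewrite exprS; ring.
Qed.

Lemma mass_sub (d : X -> R) (A B : set X) : (forall x, 0 <= d x)%R -> A `<=` B ->
  mass d A <= mass d B.
Proof.
move=> d0 AB; rewrite /mass esum_mkcond [leRHS]esum_mkcond.
apply: le_esum => x _.
case: ifPn => xA; first by rewrite ifT // inE; apply: AB; rewrite -inE.
by case: ifP => // _; rewrite lee_fin.
Qed.

Lemma Pr_complE (d : X -> R) n P : discrete_distr d ->
  Pr d n (fun s => ~ P s) = (1 - fine (Pr d n P))%:E.
Proof.
move=> dd; apply: sub_one; rewrite fineK; first exact: Pr_compl.
exact: Pr_fin.
Qed.

Lemma Pr_small (d : X -> R) n (P G : seq X -> Prop) (delta : R) : discrete_distr d ->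
  (1 - delta)%:E <= Pr d n G -> (forall s, P s -> ~ G s) -> Pr d n P <= delta%:E.
Proof.
move=> dd HG PG.
have h1 : Pr d n G <= Pr d n (fun s => ~ ~ G s) by apply: Pr_le; [exact: dd.1|move=> s Gs; exact].
rewrite (Pr_complE d n (fun s => ~ G s) dd) in h1.
have h2 : Pr d n P <= Pr d n (fun s => ~ G s) by apply: Pr_le; [exact: dd.1|exact: PG].
rewrite -(fineK (Pr_fin d n (fun s => ~ G s) dd)) in h2.
apply: (le_trans h2); rewrite lee_fin.
have := le_trans HG h1; rewrite lee_fin; lra.
Qed.

Definition badp (F : set (X -> bool)) (f : X -> bool) (E : (X -> bool) -> Prop)
  (l : seq X) := exists h, F h /\ all (fun x => h x == f x) l /\ E h.

Lemma badp_mono F f E : mono (badp F f E).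
Proof.
move=> s1 x s2 [h [Fh [Ha Eh]]]; exists h; split => //; split => //.
by move: Ha; rewrite !all_cat /= => /and3P[-> _ ->].
Qed.

End Helpers.
Arguments Pr {R X}.
Arguments nonneg {R X}.
Arguments Pr_ge0 {R X}.
Arguments Pr_le {R X}.
Arguments Pr_false {R X}.
Arguments Pr_compl {R X}.
Arguments Pr_le1 {R X}.
Arguments Pr_fin {R X}.
Arguments bridge {R X}.
Arguments PrS {R X}.
Arguments Pr_ext {R X}.
Arguments Pr_block {R X}.
Arguments Pr_allb {R X}.
Arguments Exe_esum {R X}.
Arguments Pr_mixture {R X}.
Arguments mass_sub {R X}.
Arguments Pr_complE {R X}.
Arguments Pr_small {R X}.
Arguments lemul2l {R}.
Arguments Exe {R}.
Arguments Exe_ge0 {R}.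
Arguments Exe_mono {R}.
Arguments Exe_le1 {R}.
Arguments sub_one {R}.
Arguments Exe_geom {R}.
Arguments mono {X}.
Arguments mono_cons {X}.
Arguments mono_tail {X}.
Arguments mono_nil {X}.
Arguments badp {X}.
Arguments badp_mono {X}.
Arguments esumZ {R T}.
Section Real.
Variable R : realType.

Lemma scaled_nat (n m : nat) : scaled_size (n%:R : R) m = (n * m)%N.
Proof.
by rewrite /scaled_size -natrM (_ : ((n * m)%N%:R : R) = ((n * m)%N%:Z)%:~R) // intrKceil.
Qed.

Lemma one_le_pow2 (j k : nat) : (k <= j)%N -> 1 <= (2 ^+ j : R) * (2^-1) ^+ k.
Proof.
move=> kj; rewrite -(subnK kj) exprD exprVn -mulrA mulfV ?mulr1.
  by rewrite exprn_ege1 // ler1n.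
by rewrite expf_neq0.
Qed.

Lemma bern (x : R) (n : nat) : 0 <= x <= 1 -> (1 - x) ^+ n * (1 + n%:R * x) <= 1.
Proof.
move=> /andP[x0 x1]; elim: n => [|n IH]; first by rewrite expr0 mul0r addr0 mulr1.
rewrite exprS; apply: le_trans IH.
have y0 : 0 <= (1 - x) ^+ n by apply: exprn_ge0; rewrite subr_ge0.
have n0 : 0 <= (n%:R : R) by rewrite ler0n.
have h := mulr_ge0 y0 (mulr_ge0 (addr_ge0 n0 ler01) (mulr_ge0 x0 x0)).
rewrite -natr1; nra.
Qed.

Lemma final_ineq (delta u b : R) (m : nat) :
  0 < delta < 1 -> (0 < m)%N -> u = (2^-1) ^+ m -> u <= delta -> 0 <= b -> b <= u ^+ 3 ->
  delta ^+ 2 + ((delta - delta ^+ 2) * 2 ^+ (m + m) + (1 - delta) * 2 ^+ m) * b <= delta.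
Proof.
move=> /andP[d0 d1] m0 ue ud b0 bu.
have u0 : 0 < u by rewrite ue exprn_gt0 // invr_gt0.
have u2 : u <= 2^-1.
  rewrite ue; case: m m0 {ue ud} => // m _; rewrite exprS.
  rewrite -[leRHS]mulr1 ler_wpM2l ?invr_ge0 ?ler0n //.
  by rewrite exprn_ile1 // ?invr_ge0 ?ler0n // invf_le1 // ler1n.
have hu : 2 ^+ m * u = 1 by rewrite ue exprVn mulfV // expf_neq0.
have B0 : 0 <= (delta - delta ^+ 2) * 2 ^+ (m + m) + (1 - delta) * 2 ^+ m.
  apply: addr_ge0; apply: mulr_ge0; rewrite ?exprn_ge0 ?ler0n //; nra.
apply: (@le_trans _ _ (delta ^+ 2 + ((delta - delta ^+ 2) * 2 ^+ (m + m) +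
   (1 - delta) * 2 ^+ m) * u ^+ 3)).
  by rewrite lerD2l ler_wpM2l.
have u3 : u ^+ 3 = u * u * u by rewrite !exprS expr0 mulr1 mulrA.
have -> : ((delta - delta ^+ 2) * 2 ^+ (m + m) + (1 - delta) * 2 ^+ m) * u ^+ 3
   = (delta - delta ^+ 2) * (2 ^+ m * u) * (2 ^+ m * u) * u + (1 - delta) * (2 ^+ m * u) * (u * u).
  by rewrite exprD u3; ring.
rewrite hu !mulr1.
have h1 : 0 <= (1 - delta) * delta * (1 - 2 * u).
  by apply: mulr_ge0; [apply: mulr_ge0|]; lra.
have h2 : 0 <= (1 - delta) * u * (delta - u).
  by apply: mulr_ge0; [apply: mulr_ge0|]; lra.
nra.
Qed.

End Real.

Section Main.
Variables (R : realType) (X : choiceType).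
Local Open Scope ereal_scope.

Lemma esum_point (a : X) (v : R) : (0 <= v)%R ->
  \esum_(y in [set: X]) ((if y == a then v else 0)%R)%:E = v%:E.
Proof.
move=> v0; rewrite -(@esum_set1 _ _ a (fun _ : X => v%:E)); last by rewrite lee_fin.
rewrite [RHS]esum_mkcond; apply: eq_esum => y _; rewrite in_set1.
by case: ifP.
Qed.

Lemma consistent_map (l : seq X) (f h : X -> bool) :
  consistent [seq (x, f x) | x <- l] h = all (fun x => h x == f x) l.
Proof. by rewrite /consistent all_map. Qed.

Lemma delta_lb (F : set (X -> bool)) (eps delta : R) m f0 h0 a0 b0 :
  (0 < eps < 2^-1)%R -> pac_sufficient F eps delta m -> F f0 -> F h0 ->
  h0 a0 != f0 a0 -> h0 b0 == f0 b0 -> ((2^-1) ^+ m <= delta)%R.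
Proof.
move=> /andP[e0 e1] Hpac Ff0 Fh0 ha hb.
have ab : a0 != b0 by apply: contraNneq ha => ->.
pose d2 := fun y : X => ((if y == a0 then 2^-1 else 0) + (if y == b0 then 2^-1 else 0) : R)%R.
have h2 : (0 <= (2^-1 : R))%R by rewrite invr_ge0 ler0n.
have d2d : discrete_distr d2.
  split.
    by move=> y; rewrite /d2; apply: addr_ge0; case: ifP.
  rewrite (eq_esum (fun y _ => EFinD _ _)) esumD; first last.
  - by move=> y _; case: ifP; rewrite lee_fin.
  - by move=> y _; case: ifP; rewrite lee_fin.
  by rewrite !esum_point // -EFinD; congr EFin; lra.
have := Hpac d2 f0 d2d Ff0.
pose G2 := fun l : seq X => forall h, F h ->
   consistent [seq (x, f0 x) | x <- l] h -> err d2 f0 h <= eps%:E.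
rewrite (bridge d2 m G2 d2d.1) => HG.
have := Pr_small d2 m (fun l => all (pred1 b0) l) G2 delta d2d HG.
have errb : err d2 f0 h0 > eps%:E.
  apply: (@lt_le_trans _ _ (d2 a0)%:E).
    by rewrite lte_fin /d2 eqxx (negbTE ab) addr0; lra.
  rewrite /err /mass; apply: esum_ge; exists [set a0].
    by split; [exact: finite_set1| move=> y -> /=].
  by rewrite fsbig_set1.
have H1 : forall s, all (pred1 b0) s -> ~ G2 s.
  move=> s sb HG2; have := HG2 h0 Fh0; rewrite consistent_map.
  have -> : all (fun x => h0 x == f0 x) s.
    by apply: sub_all sb => x /= /eqP ->.
  by move=> /(_ isT) H; move: errb; rewrite ltNge H.
move=> /(_ H1) H; have := le_trans (Pr_allb d2 b0 m d2d.1) H.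
by rewrite /d2 eqxx eq_sym (negbTE ab) add0r lee_fin.
Qed.

Lemma phi_bound (q : X -> R) (P : seq X -> Prop) (delta : R) m k :
  discrete_distr q -> mono P -> (0 < delta < 1)%R -> Pr q m P <= delta%:E ->
  Pr q k P <= (delta ^+ 2 + ((delta - delta ^+ 2) * 2 ^+ (m + m)
                 + (1 - delta) * 2 ^+ m) * (2^-1) ^+ k)%:E.
Proof.
move=> qd mP /andP[d0 d1] Hm.
have dd2 : (0 <= delta - delta ^+ 2)%R by rewrite expr2; nra.
have t0 : (0 <= (2^-1 : R) ^+ k)%R by rewrite exprn_ge0 // invr_ge0 ler0n.
have e : (((delta - delta ^+ 2) * 2 ^+ (m + m) + (1 - delta) * 2 ^+ m) * (2^-1) ^+ k
   = (delta - delta ^+ 2) * (2 ^+ (m + m) * (2^-1) ^+ k)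
     + (1 - delta) * (2 ^+ m * (2^-1) ^+ k))%R by ring.
rewrite e.
have A10 : (0 <= 2 ^+ (m + m) * (2^-1 : R) ^+ k)%R by rewrite mulr_ge0 // exprn_ge0 // ler0n.
have A20 : (0 <= 2 ^+ m * (2^-1 : R) ^+ k)%R by rewrite mulr_ge0 // exprn_ge0 // ler0n.
have Hb : forall j, Pr q (m + j) P <= delta%:E.
  move=> j; apply: le_trans (Pr_block q m j P qd mP) _.
  rewrite -[delta%:E]mule1; apply: lee_pmul => //.
  - exact: Pr_ge0 qd.1.
  - exact: Pr_ge0 qd.1.
  - exact: Pr_le1.
case: (ltnP k m) => km.
  apply: le_trans (Pr_le1 q k P qd) _; rewrite lee_fin.
  have X1 := one_le_pow2 R (m + m) k (leq_trans (ltnW km) (leq_addr m m)).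
  have X2 := one_le_pow2 R m k (ltnW km).
  have h1 : (0 <= (delta - delta ^+ 2) * (2 ^+ (m + m) * (2^-1) ^+ k - 1))%R.
    by apply: mulr_ge0 => //; rewrite subr_ge0.
  have h2 : (0 <= (1 - delta) * (2 ^+ m * (2^-1) ^+ k - 1))%R.
    by apply: mulr_ge0; rewrite subr_ge0 // ltW.
  nra.
case: (ltnP k (m + m)) => k2.
  have := Hb (k - m)%N; rewrite subnKC // => H; apply: le_trans H _.
  rewrite lee_fin.
  have X1 := one_le_pow2 R (m + m) k (ltnW k2).
  have h1 : (0 <= (delta - delta ^+ 2) * (2 ^+ (m + m) * (2^-1) ^+ k - 1))%R.
    by apply: mulr_ge0 => //; rewrite subr_ge0.
  have h2 : (0 <= (1 - delta) * (2 ^+ m * (2^-1) ^+ k))%R.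
    by apply: mulr_ge0; rewrite ?subr_ge0 // ltW.
  nra.
have e1 := Pr_block q m (k - m) P qd mP; rewrite subnKC // in e1.
have e2 := Hb (k - m - m)%N; rewrite subnKC ?leq_subRL // in e2.
apply: (le_trans e1); apply: (@le_trans _ _ (delta%:E * delta%:E)).
  apply: lee_pmul => //; exact: Pr_ge0 qd.1.
rewrite -EFinM lee_fin expr2.
have d1' : (0 <= 1 - delta)%R by rewrite subr_ge0 ltW.
have := mulr_ge0 dd2 A10; have := mulr_ge0 d1' A20; nra.
Qed.

Lemma main_case (c cm : R) (n0 : nat) (F : set (X -> bool)) (d d' : X -> R)
    (fstar : X -> bool) (eps delta : R) (m : nat) (B : set X) :
  (0 < cm)%R -> (cm <= c)%R -> (cm <= 1)%R ->
  ((1 - cm / 4) ^+ n0 <= (2^-1) ^+ 3)%R ->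
  discrete_distr d -> discrete_distr d' -> F fstar ->
  (0 < eps < 2^-1)%R -> (0 < delta < 1)%R -> (0 < m)%N ->
  mass d B <= eps%:E -> (forall x, ~ B x -> (c * d x <= d' x)%R) ->
  pac_sufficient F eps delta m -> ((2^-1) ^+ m <= delta)%R ->
  Pr d' (n0 * m) (badp F fstar (fun h => ~ (err d fstar h <= (2 * eps)%:E)))
    <= delta%:E.
Proof.
move=> cm0 cmc cm1 hn0 dd dd' Ff /andP[e0 e1] /andP[de0 de1] m0 HB Hcd Hpac hdm.
have d0 := dd.1.
have mB0' : 0 <= mass d B by apply: esum_ge0 => y _; rewrite lee_fin.
have mBf : mass d B \is a fin_num.
  by rewrite ge0_fin_numE // (le_lt_trans HB) // ltry.
set mB := fine (mass d B).
have mB0 : (0 <= mB)%R by apply: fine_ge0.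
have mBe : (mB <= eps)%R by rewrite -lee_fin /mB fineK.
set s := (1 - mB)%R.
have s0 : (2^-1 < s)%R by rewrite /s; lra.
have s0' : (0 < s)%R by apply: lt_trans s0; rewrite invr_gt0 ltr0n.
have s1 : (s <= 1)%R by rewrite /s; lra.
have sC : \esum_(x in ~` B) (d x)%:E = s%:E.
  apply: (sub_one mB); rewrite /mB fineK // -dd.2 [in RHS](esumID B) ?setTI //.
  by move=> y _; rewrite lee_fin.
pose q := fun y => if y \in B then 0%R else (d y / s)%R.
have q0 : nonneg q.
  by move=> y; rewrite /q; case: ifP => // _; rewrite divr_ge0 // ltW.
have qd : discrete_distr q.
  split => //.
  transitivity (\esum_(y in ~` B) (s^-1)%:E * (d y)%:E).
    rewrite [RHS]esum_mkcond; apply: eq_esum => y _; rewrite in_setC /q.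
    by case: ifP => //= _; rewrite -EFinM mulrC.
  have si : (0 <= s^-1)%R by rewrite invr_ge0 ltW.
  have h := @esumZ _ _ (~` B) (fun y => (d y)%:E) (s^-1) si (fun y => d0 y).
  by rewrite h sC -EFinM mulVf // gt_eqF.
have errq : forall h, err d fstar h <= eps%:E + err q fstar h.
  move=> h; rewrite /err /mass (esumID B); last by move=> *; rewrite lee_fin.
  apply: leeD.
    apply: le_trans HB; apply: (mass_sub d _ _ d0) => y [] //.
  rewrite esum_mkcondr; apply: le_esum => y _; rewrite in_setC /q.
  case: (boolP (y \in B)) => yB /=; first by [].
  rewrite lee_fin ler_pdivlMr //; have := d0 y; nra.
set aa := (cm / 2)%R.
have aa01 : (0 <= aa <= 1)%R by apply/andP; split; rewrite /aa; lra.
have aqd : forall y, (aa * q y <= d' y)%R.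
  move=> y; rewrite /q; case: ifPn => yB; first by rewrite mulr0; exact: dd'.1.
  have nB : ~ B y by move=> By; move: yB; rewrite (mem_set By).
  apply: le_trans (Hcd y nB).
  have hc : (aa / s <= c)%R by rewrite ler_pdivrMr // /aa; nra.
  by rewrite mulrA mulrAC; apply: ler_wpM2r.
set Badq := badp F fstar (fun h => ~ (err q fstar h <= eps%:E)).
have PrQ : Pr q m Badq <= delta%:E.
  have := Hpac q fstar qd Ff.
  pose Gq := fun l : seq X => forall h, F h ->
     consistent [seq (x, fstar x) | x <- l] h -> err q fstar h <= eps%:E.
  rewrite (bridge q m Gq qd.1) => HG.
  apply: (Pr_small q m Badq Gq delta qd HG) => l [h [Fh [Hc Hn]]] HGl.
  by apply: Hn; apply: HGl => //; rewrite consistent_map.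
apply: (@le_trans _ _ (Pr d' (n0 * m) Badq)).
  apply: Pr_le; first exact: dd'.1.
  move=> l [h [Fh [Hc Hn]]]; exists h; split => //; split => //.
  move=> Hq; apply: Hn; apply: (le_trans (errq h)).
  rewrite (_ : (2 * eps)%R = eps + eps)%R; last by ring.
  by rewrite EFinD; apply: leeD.
apply: le_trans (Pr_mixture q d' aa (n0 * m) Badq qd dd' aa01 aqd (badp_mono _ _ _)) _.
apply: (@le_trans _ _ (Exe aa (n0 * m) (fun k => (delta ^+ 2 + ((delta - delta ^+ 2)
   * 2 ^+ (m + m) + (1 - delta) * 2 ^+ m) * (2^-1) ^+ k)%:E))).
  apply: Exe_mono => // k; apply: phi_bound => //; first exact: badp_mono.
  by apply/andP.
rewrite Exe_geom // lee_fin.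
have eb : (aa * 2^-1 + 1 - aa = 1 - cm / 4)%R by rewrite /aa; field.
rewrite eb.
apply: (final_ineq R delta ((2^-1) ^+ m) _ m) => //.
- by apply/andP.
- by apply: exprn_ge0; lra.
rewrite exprM -[X in (_ <= X)%R]exprM mulnC [X in (_ <= X)%R]exprM.
apply: lerXn2r => //; rewrite ?nnegrE //.
by apply: exprn_ge0; lra.
Qed.

End Main.

Arguments esum_point {R X}.
Arguments consistent_map {X}.
Arguments delta_lb {R X}.
Arguments phi_bound {R X}.
Arguments main_case {R X}.

Theorem lemma12 (R : realType) (c : R) (hc : 0 < c) :
  exists c' : R, 1 < c' /\
  forall (X : choiceType) (F : set (X -> bool))
         (O : seq (X * bool) -> option (X -> bool))
         (d d' : X -> R) (fstar : X -> bool) (eps delta : R) (m : nat),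
    consistency_oracle F O ->
    discrete_distr d -> discrete_distr d' -> F fstar ->
    0 < eps < 1 -> 0 < delta < 1 ->
    (exists B : set X, (mass d B <= eps%:E)%E /\
                       forall x, ~ B x -> c * d x <= d' x) ->
    sample_complexity F eps delta m ->
    ((1 - delta)%:E <=
     sample_prob d' [set s : (scaled_size c' m).-tuple X |
        exists h, O (labeled s fstar) = Some h /\
                  (err d fstar h <= (2 * eps)%:E)%E])%E.
Proof.
set cm := c / (1 + c).
have c1 : 0 < 1 + c by lra.
have cm0 : 0 < cm by rewrite /cm divr_gt0.
have cmc : cm <= c by rewrite /cm ler_pdivrMr //; nra.
have cm1 : cm <= 1 by rewrite /cm ler_pdivrMr //; lra.
set n0 := (Num.Def.archi_bound (28 / cm) + 2)%N.
have hb : 28 / cm < n0%:R.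
  apply: (lt_le_trans (archi_boundP _)); first by rewrite divr_ge0 // ltW.
  by rewrite ler_nat /n0 leq_addr.
have hn0x : 7 <= n0%:R * (cm / 4).
  move: hb; rewrite ltr_pdivrMr // => hb; lra.
have hn0 : (1 - cm / 4) ^+ n0 <= (2^-1) ^+ 3.
  have hB := bern R (cm / 4) n0 (ltac:(apply/andP; split; lra)).
  have y0 : 0 <= (1 - cm / 4) ^+ n0 by apply: exprn_ge0; lra.
  have -> : (2^-1 : R) ^+ 3 = 8^-1 by rewrite exprVn; congr (_^-1); rewrite -natrX.
  have h := mulr_ge0 y0 (ltac:(lra) : 0 <= n0%:R * (cm / 4) - 7).
  rewrite -[8^-1]mul1r ler_pdivlMr ?ltr0n //; nra.
exists n0%:R; split; first by rewrite ltr1n /n0 addn2.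
move=> X F O d d' fstar eps delta m HO dd dd' Ff /andP[e0 e1] /andP[de0 de1]
  [B [HB Hcd]] [Hpac Hmin].
rewrite scaled_nat.
set N := (n0 * m)%N.
set Bad := badp F fstar (fun h => ~ (err d fstar h <= (2 * eps)%:E)%E).
pose G := fun l : seq X => exists h, O [seq (x, fstar x) | x <- l] = Some h /\
   (err d fstar h <= (2 * eps)%:E)%E.
rewrite (bridge d' N G dd'.1).
have HG : forall l, ~ Bad l -> G l.
  move=> l nB; have := HO [seq (x, fstar x) | x <- l].
  case E: (O _) => [h|].
    move=> [Fh Hc]; exists h; split => //.
    case: (boolP (err d fstar h <= (2 * eps)%:E)%E) => // /negP hn.
    by exfalso; apply: nB; exists h; split => //; split => //; rewrite -consistent_map.
  move=> H; exfalso; apply: H; exists fstar; split => //.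
  by rewrite consistent_map; apply/allP => x _.
suff HBad : (Pr d' N Bad <= delta%:E)%E.
  apply: (le_trans _ (Pr_le d' N _ _ dd'.1 HG)).
  rewrite (Pr_complE d' N Bad dd') lee_fin.
  rewrite -(fineK (Pr_fin d' N Bad dd')) lee_fin in HBad; lra.
case: (ltP eps (2^-1)) => eh; last first.
  rewrite Pr_false ?lee_fin ?ltW // => l [h [Fh [_ Hn]]]; apply: Hn.
  apply: le_trans (mass_sub d _ setT dd.1 (@subsetT _ _)) _.
  by rewrite /mass dd.2 lee_fin; lra.
move: Hpac Hmin; rewrite /N; clear N; case: m => [|m] Hpac Hmin.
  rewrite Pr_false ?lee_fin ?ltW // => l [h [Fh [_ Hn]]]; apply: Hn.
  pose Gd := fun l : seq X => forall h, F h ->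
     consistent [seq (x, fstar x) | x <- l] h -> (err d fstar h <= eps%:E)%E.
  have := Hpac d fstar dd Ff; rewrite (bridge d 0 Gd dd.1) /=.
  case: (asboolP (Gd [::])) => [HGd _| _]; last by rewrite lee_fin => H; exfalso; lra.
  by apply: le_trans (HGd h Fh isT) _; rewrite lee_fin; lra.
case: (pselect (exists f0 h0 a0 b0, [/\ F f0, F h0, h0 a0 != f0 a0 & h0 b0 == f0 b0])).
  move=> [f0 [h0 [a0 [b0 [Ff0 Fh0 ha hb0]]]]].
  have hdm := delta_lb F eps delta m.+1 f0 h0 a0 b0
    (ltac:(by apply/andP)) Hpac Ff0 Fh0 ha hb0.
  apply: (main_case c cm n0 F d d' fstar eps delta m.+1 B cm0 cmc cm1 hn0 dd dd' Ff)
    => //; by apply/andP.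
move=> nd.
have NS : (n0 * m.+1 = (n0 * m.+1).-1.+1)%N by rewrite prednK // muln_gt0 /n0 addn2.
rewrite NS PrS esum1 ?lee_fin ?ltW // => x _.
rewrite Pr_false ?mule0 // => l [h [Fh [Hc Hn]]]; apply: Hn.
have hx : h x == fstar x by case/andP: Hc.
have hall : forall y, h y == fstar y.
  move=> y; apply/negPn/negP => hy; apply: nd.
  by exists fstar, h, y, x; split.
rewrite /err /mass esum1 ?lee_fin; first lra.
by move=> y /= hy; move: hy; rewrite hall.
Qed.
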